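(* Let $f,g$ be complex-valued functions of two variables with $f\perp g$, let $\{a_i\}_{i\ge0},\{b_i\}_{i\ge0}$ be sequences, $x$ a complex number, and $m\ge 0$ an integer, such that $f(a_0,b_0)\ne0$ and $g(b_j,b_0)\neq0$, $f(a_j,x)\ne0$ for $1\le j\le m$. Then $$\sum_{k=0}^{m}\frac{f(a_k,b_k)}{f(a_0,b_0)}\frac{\prod_{j=0}^{k-1}f(a_j,b_0)}{\prod_{j=1}^{k}g(b_j,b_0)}\frac{\prod_{j=0}^{k-1}g(b_j,x)}{\prod_{j=1}^{k}f(a_j,x)}=\frac{\prod_{j=1}^{m}f(a_j,b_0)}{\prod_{j=1}^{m}g(b_j,b_0)}\frac{\prod_{j=1}^{m}g(b_j,x)}{\prod_{j=1}^{m}f(a_j,x)}.$$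
   Context: $f\perp g$ means $g(u,v)f(z,w)-g(u,w)f(z,v)+g(v,w)f(z,u)=0$ for all $u,v,w,z$. Empty products equal $1$. *)

(* Defs.v *)
From mathcomp Require Import all_boot all_order all_algebra.
From mathcomp Require Import complex reals.
Set Implicit Arguments. Unset Strict Implicit. Unset Printing Implicit Defensive.
Import GRing.Theory Num.Theory.
Local Open Scope ring_scope.

Definition perp (R : realType) (f g : R[i] -> R[i] -> R[i]) : Prop :=
  forall u v w z : R[i],
    g u v * f z w - g u w * f z v + g v w * f z u = 0.

(* Main.v *)
Require Import Defs.
From mathcomp Require Import all_boot all_order all_algebra.
From mathcomp Require Import complex reals.
From mathcomp Require Import ring.
Local Open Scope ring_scope.
Import GRing.Theory.

Theorem corollary3p1 (R : realType) (f g : R[i] -> R[i] -> R[i])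
    (a b : nat -> R[i]) (x : R[i]) (m : nat) :
  perp f g ->
  f (a 0%N) (b 0%N) != 0 ->
  (forall j, (1 <= j <= m)%N -> g (b j) (b 0%N) != 0) ->
  (forall j, (1 <= j <= m)%N -> f (a j) x != 0) ->
  \sum_(0 <= k < m.+1)
     (f (a k) (b k) / f (a 0%N) (b 0%N))
     * ((\prod_(0 <= j < k) f (a j) (b 0%N)) / (\prod_(1 <= j < k.+1) g (b j) (b 0%N)))
     * ((\prod_(0 <= j < k) g (b j) x) / (\prod_(1 <= j < k.+1) f (a j) x))
  = ((\prod_(1 <= j < m.+1) f (a j) (b 0%N)) / (\prod_(1 <= j < m.+1) g (b j) (b 0%N)))
    * ((\prod_(1 <= j < m.+1) g (b j) x) / (\prod_(1 <= j < m.+1) f (a j) x)).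
Proof.
move=> hp h0; elim: m => [|m IH] hg hf.
  by rewrite big_nat1 !big_geq // !divr1 !mulr1 divff.
have hg' : forall j, (1 <= j <= m)%N -> g (b j) (b 0%N) != 0.
  by move=> j /andP[h1 h2]; apply: hg; rewrite h1 /= ltnW.
have hf' : forall j, (1 <= j <= m)%N -> f (a j) x != 0.
  by move=> j /andP[h1 h2]; apply: hf; rewrite h1 /= ltnW.
rewrite big_nat_recr //= IH //.
have hG : \prod_(1 <= j < m.+1) g (b j) (b 0%N) != 0.
  rewrite big_nat prodf_seq_neq0; apply/allP => j _; apply/implyP => /andP[h1 h2].
  by apply: hg'; rewrite h1.
have hC : \prod_(1 <= j < m.+1) f (a j) x != 0.
  rewrite big_nat prodf_seq_neq0; apply/allP => j _; apply/implyP => /andP[h1 h2].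
  by apply: hf'; rewrite h1.
have hgm : g (b m.+1) (b 0%N) != 0 by apply: hg; rewrite /= leqnn.
have hfm : f (a m.+1) x != 0 by apply: hf; rewrite /= leqnn.
rewrite (@big_ltn _ _ _ 0 m.+1) // (@big_ltn _ _ _ 0 m.+1) //.
rewrite !(big_nat_recr m.+1 1) //=.
have e := hp (b m.+1) (b 0%N) x (a m.+1).
move: hG hC hgm hfm h0 e.
set G := \prod_(1 <= j < m.+1) g (b j) (b 0%N).
set C := \prod_(1 <= j < m.+1) f (a j) x.
set A := \prod_(1 <= j < m.+1) f (a j) (b 0%N).
set B := \prod_(1 <= j < m.+1) g (b j) x.
move=> hG hC hgm hfm h0 e.
set F := f (a m.+1) (b m.+1).
set y := g (b 0%N) x.
have kF : F * y = f (a m.+1) (b 0%N) * g (b m.+1) x - g (b m.+1) (b 0%N) * f (a m.+1) x.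
  by rewrite -[LHS]subr0 -{1}e /F /y; ring.
have -> : A / G * (B / C) + F / f (a 0%N) (b 0%N) * (f (a 0%N) (b 0%N) * A / (G * g (b m.+1) (b 0%N))) *
   (y * B / (C * f (a m.+1) x)) = A / G * (B / C) + (f (a m.+1) (b 0%N) * g (b m.+1) x - g (b m.+1) (b 0%N) * f (a m.+1) x) * (A / (G * g (b m.+1) (b 0%N))) * (B / (C * f (a m.+1) x)).
  by rewrite -kF /F /y; field; rewrite hfm hC hgm hG h0.
field; by rewrite hfm hC hgm hG.
Qed.
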